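(* Let $n\ge 2$ be an integer, let $Z$ be a finite set and let $T_1,T_2$ be rooted $Z$-trees with $\mathrm{Seq}(T_1)=\mathrm{Seq}(T_2)$. Let $Q_1,\dots,Q_k$ and $R_1,\dots,R_m$ be as defined in the context, and suppose $|Q_j|<|Z|/\log n$ and $|R_l|<|Z|/\log n$ for all $1\le j\le k$, $1\le l\le m$. Then there is a set $A\subseteq Z$ with $|A|\ge\log n$ such that the unrooted trees obtained from $T_1|A$ and $T_2|A$ by suppressing the root are identical, and they are caterpillars.
   Context: A rooted $Z$-tree is a binary rooted tree with a root of degree two, all other internal nodes of degree three, leaves bijectively labeled by $Z$, and each internal node having a designated left child and right child. For a node $v$, $T_v$ is the subtree rooted at $v$; $\mathrm{Le}(\cdot)$ is the leaf set; the size $|T|$ of a tree is its number of leaves. For $A\subseteq Z$, $T|A$ is the rooted tree obtained from the minimal subtree spanning $A$, rooted at the least common ancestor of $A$, by suppressing non-root degree-two nodes. $\mathrm{Seq}(T)$ is the left-to-right leaf ordering given by pre-order traversal (left child before right child). Let $P_1=(u_1,\dots,u_k)$ be the path in $T_1$ from its left-most leaf $u_1$ to its root $u_k$; $Q_1:=$ the one-leaf tree $u_1$ and for $2\le j\le k$, $Q_j:=(T_1)_c$ with $c$ the child of $u_j$ other than $u_{j-1}$. Let $P_2=(w_1,\dots,w_m)$ be the path in $T_2$ from its root $w_1$ to its right-most leaf $w_m$; $R_m:=$ the one-leaf tree $w_m$ and for $1\le l<m$, $R_l:=(T_2)_c$ with $c$ the child of $w_l$ other than $w_{l+1}$. Unrooted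 trees are identical if there is a label-preserving graph isomorphism; a tree is a caterpillar if every internal node is adjacent to at least one leaf. $\log=\log_2$. *)

(* Defs.v *)
From mathcomp Require Import all_boot.
From Stdlib Require Import Reals.
Set Implicit Arguments. Unset Strict Implicit. Unset Printing Implicit Defensive.

Inductive btree (T : Type) : Type :=
| BLeaf of T
| BNode of btree T & btree T.
Arguments BLeaf {T}.
Arguments BNode {T}.

Section Trees.
Variable Z : finType.

Fixpoint leaves (t : btree Z) : seq Z :=
  match t with BLeaf x => [:: x] | BNode l r => leaves l ++ leaves r end.

Definition nleaves (t : btree Z) : nat := size (leaves t).

Definition is_Ztree (t : btree Z) : bool :=
  uniq (leaves t) && [forall z : Z, z \in leaves t].

(* T|A: restriction to A (None iff A misses all leaves); nodes left with a
   single child are suppressed, and the result is rooted at the lca of A. *)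
Fixpoint restrict (A : {set Z}) (t : btree Z) : option (btree Z) :=
  match t with
  | BLeaf x => if x \in A then Some (BLeaf x) else None
  | BNode l r =>
      match restrict A l, restrict A r with
      | Some a, Some b => Some (BNode a b)
      | Some a, None => Some a
      | None, Some b => Some b
      | None, None => None
      end
  end.

(* Q_1,...,Q_k : the subtrees hanging off the path from the left-most leaf to
   the root (Q_1 = the left-most leaf, Q_j = the right subtree at u_j). *)
Fixpoint left_hangs (t : btree Z) : seq (btree Z) :=
  match t with BLeaf x => [:: BLeaf x] | BNode l r => r :: left_hangs l end.

(* R_1,...,R_m : the subtrees hanging off the path from the root to the
   right-most leaf (R_m = the right-most leaf, R_l = left subtree at w_l). *)
Fixpoint right_hangs (t : btree Z) : seq (btree Z) :=
  match t with BLeaf x => [:: BLeaf x] | BNode l r => l :: right_hangs r end.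

(* Nodes of a tree, as addresses = paths from the root (false = left). *)
Fixpoint addrs (t : btree Z) : seq (seq bool) :=
  match t with
  | BLeaf _ => [:: [::]]
  | BNode l r => [::] :: (map (cons false) (addrs l) ++ map (cons true) (addrs r))
  end.

Fixpoint label (t : btree Z) (p : seq bool) : option Z :=
  match t, p with
  | BLeaf x, [::] => Some x
  | BNode l _, false :: p' => label l p'
  | BNode _ r, true :: p' => label r p'
  | _, _ => None
  end.

Definition is_node (t : btree Z) : bool := if t is BNode _ _ then true else false.

(* Unrooted tree obtained by suppressing the (degree-two) root:
   vertices = all nodes except the root; edges = parent-child edges not
   incident to the root, plus an edge joining the two children of the root. *)
Definition uverts (t : btree Z) : seq (seq bool) :=
  if is_node t then [seq p <- addrs t | p != [::]] else addrs t.

Definition uadj (t : btree Z) (p q : seq bool) : bool :=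
  [&& p \in uverts t, q \in uverts t &
   [|| q == rcons p false, q == rcons p true,
       p == rcons q false, p == rcons q true,
       is_node t && (p == [:: false]) && (q == [:: true]) |
       is_node t && (p == [:: true]) && (q == [:: false])]].

(* Identical unrooted trees: a label-preserving graph isomorphism. *)
Definition uiso (t1 t2 : btree Z) : Prop :=
  exists f : seq bool -> seq bool,
    [/\ {in uverts t1 &, injective f},
        perm_eq (map f (uverts t1)) (uverts t2),
        {in uverts t1 &, forall p q, uadj t2 (f p) (f q) = uadj t1 p q} &
        {in uverts t1, forall p, label t2 (f p) = label t1 p}].

Definition caterpillar (t : btree Z) : Prop :=
  forall p, p \in uverts t -> label t p = None ->
    exists2 q, uadj t p q & label t q != None.

End Trees.

Definition log2 (x : R) : R := Rdiv (ln x) (ln 2).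

(* Main.v *)
Require Import Defs.
From mathcomp Require Import all_boot.
From Stdlib Require Import Reals Lia Lra.
From mathcomp Require Import zify.
Set Implicit Arguments. Unset Strict Implicit. Unset Printing Implicit Defensive.

Section Greedy.
Variable Z : finType.

Fixpoint dropf (n : nat) (B : seq (seq Z)) : seq (seq Z) :=
  match B with
  | [::] => [::]
  | b :: B' => if n < size b then drop n b :: B' else dropf (n - size b) B'
  end.

Lemma flatten_dropf n B : flatten (dropf n B) = drop n (flatten B).
Proof.
elim: B n => [|b B IH] n //=; rewrite drop_cat; case: ifP => //=.
Qed.

Definition nonemp (b : seq Z) : bool := b != [::].

Lemma dropf_nonemp n B : all nonemp B -> all nonemp (dropf n B).
Proof.
elim: B n => [|b B IH] n //= /andP [Hb HB]; case: ifP => H /=; last exact: IH.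
rewrite HB andbT /nonemp -size_eq0 size_drop; apply/eqP => E.
by move: H; rewrite -subn_gt0 E.
Qed.

Lemma dropf_size M n B : all (fun b => size b <= M) B ->
  all (fun b => size b <= M) (dropf n B).
Proof.
elim: B n => [|b B IH] n //= /andP [Hb HB]; case: ifP => H /=; last exact: IH.
by rewrite HB andbT size_drop (leq_trans (leq_subr _ _) Hb).
Qed.

Lemma dropf_block n B b : uniq (flatten B) -> b \in B ->
  exists b'', forall y, y \in b -> y \in drop n (flatten B) ->
     b'' \in dropf n B /\ y \in b''.
Proof.
elim: B n => [|b0 B IH] n //= Hu; rewrite in_cons; move: Hu; rewrite cat_uniq.
case/and3P => Hu0 Hdis HuB.
case Eb: (b == b0) => /= Hb.
- move/eqP: Eb => ->; rewrite drop_cat.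
  case: ifP => Hn.
  + exists (drop n b0) => y Hy; rewrite mem_cat; case/orP => Hy2.
      by rewrite /= in_cons eqxx.
    by move: Hdis; rewrite -all_predC => /allP /(_ _ Hy2) /=; rewrite Hy.
  + exists [::] => y Hy Hy2; exfalso.
    have Hy3 : y \in flatten B by move: Hy2; apply: mem_drop.
    by move: Hdis; rewrite -all_predC => /allP /(_ _ Hy3) /=; rewrite Hy.
- rewrite drop_cat; case: ifP => Hn.
  + exists b => y Hy _; split => //=; by rewrite in_cons Hb orbT.
  + have [b'' Hb''] := IH (n - size b0) HuB Hb.
    by exists b''.
Qed.

Definition amo (a l : seq Z) := forall y z, y \in a -> z \in a -> y \in l -> z \in l -> y = z.

Definition GP M (B C : seq (seq Z)) (a : seq Z) :=
  [/\ uniq a, {subset a <= flatten B}, (forall b, b \in B -> amo a b),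
      (forall c, c \in C -> amo a c) & size (flatten B) <= size a * M].

Lemma disj_mem (s1 s2 : seq Z) y : uniq (s1 ++ s2) -> y \in s1 -> y \in s2 -> False.
Proof.
rewrite cat_uniq => /and3P [_ Hd _] H1 H2.
by move: Hd; rewrite -all_predC => /allP /(_ _ H2) /=; rewrite H1.
Qed.

Lemma greedy_step M N b1 B' c1 C' :
  (forall B C, size (flatten B) <= N -> flatten B = flatten C -> uniq (flatten B) ->
     all nonemp B -> all nonemp C -> all (fun b => size b <= M) B ->
     all (fun b => size b <= M) C -> exists a, GP M B C a) ->
  size (flatten (b1 :: B')) <= N.+1 ->
  flatten (b1 :: B') = flatten (c1 :: C') -> uniq (flatten (b1 :: B')) ->
  all nonemp (b1 :: B') -> all nonemp (c1 :: C') ->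
  all (fun b => size b <= M) (b1 :: B') ->
  all (fun b => size b <= M) (c1 :: C') -> size b1 <= size c1 ->
  exists a, GP M (b1 :: B') (c1 :: C') a.
Proof.
move=> IH /= Hsz Heq Hu /andP [Hb1 HB'] /andP [Hc1 HC'] /andP [Mb1 MB'] /andP [Mc1 MC'] Hle.
set s := b1 ++ flatten B'.
have Hs2 : s = c1 ++ flatten C' by [].
have Hu2 : uniq (c1 ++ flatten C') by rewrite -Heq.
have Htake : b1 = take (size b1) c1.
  by rewrite -(takel_cat (flatten C') Hle) -Heq take_size_cat.
have [x [b1' Eb1]] : exists x b1', b1 = x :: b1' by case: (b1) Hb1 => // x b1' _; exists x, b1'.
have Hxc1 : x \in c1.
  have : x \in b1 by rewrite Eb1 mem_head.
  by rewrite Htake => /mem_take.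
set B'' := dropf (size c1) (b1 :: B').
have HfB : flatten B'' = flatten C'.
  by rewrite /B'' flatten_dropf /= Heq drop_size_cat.
have Hc1pos : 0 < size c1 by case: (c1) Hc1.
have [a' [Hua' Hsa' HBa' HCa' Hsza']] : exists a', GP M B'' C' a'.
  apply: IH => //.
  - rewrite HfB; move: Hsz; rewrite Heq size_cat; move=> h2; rewrite -ltnS (leq_trans _ h2) // -add1n leq_add2r.
    exact: Hc1pos.
  - by rewrite HfB; move: Hu2; rewrite cat_uniq => /and3P [].
  - by apply: dropf_nonemp => /=; rewrite /nonemp Eb1 HB'.
  - by apply: dropf_size => /=; rewrite Mb1.
have Hxa' : x \notin a'.
  apply/negP => /Hsa'; rewrite HfB => H; exact: (disj_mem Hu2 Hxc1 H).
have Hc1a y : y \in x :: a' -> y \in c1 -> y = x.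
  rewrite in_cons => /orP [/eqP //|] /Hsa'; rewrite HfB => H1 H2.
  by case: (disj_mem Hu2 H2 H1).
exists (x :: a'); split.
- by rewrite /= Hxa'.
- move=> y; rewrite in_cons => /orP [/eqP -> |/Hsa'].
    by rewrite /= Eb1 in_cons eqxx.
  by rewrite HfB /= Heq mem_cat => ->; rewrite orbT.
- move=> b; rewrite in_cons => /orP [/eqP -> | Hb].
    move=> y z Hy Hz Hyb Hzb.
    have Hyc : y \in c1 by move: Hyb; rewrite Htake => /mem_take.
    have Hzc : z \in c1 by move: Hzb; rewrite Htake => /mem_take.
    by rewrite (Hc1a y Hy Hyc) (Hc1a z Hz Hzc).
  have Hxb : x \notin b.
    apply/negP => Hxb.
    have Hx1 : x \in b1 by rewrite Eb1 mem_head.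
    have Hx2 : x \in flatten B' by apply/flattenP; exists b.
    by apply: (disj_mem Hu Hx1 Hx2).
  have Hub : uniq (flatten (b1 :: B')) by [].
  have Hbin : b \in b1 :: B' by rewrite in_cons Hb orbT.
  have [b'' Hb''] := dropf_block (size c1) Hub Hbin.
  move=> y z Hy Hz Hyb Hzb.
  have Hy' : y \in a' by move: Hy; rewrite in_cons => /orP [/eqP Ey|//]; by rewrite -Ey Hyb in Hxb.
  have Hz' : z \in a' by move: Hz; rewrite in_cons => /orP [/eqP Ez|//]; by rewrite -Ez Hzb in Hxb.
  have Hdy : y \in drop (size c1) (flatten (b1 :: B')).
    by rewrite /= Heq (drop_size_cat _ (erefl _)) -HfB; apply: Hsa'.
  have Hdz : z \in drop (size c1) (flatten (b1 :: B')).
    by rewrite /= Heq (drop_size_cat _ (erefl _)) -HfB; apply: Hsa'.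
  have [Hb1'' Hyb''] := Hb'' y Hyb Hdy.
  have [_ Hzb''] := Hb'' z Hzb Hdz.
  exact: (HBa' b'' Hb1'' y z Hy' Hz' Hyb'' Hzb'').
- move=> c; rewrite in_cons => /orP [/eqP -> | Hc].
    move=> y z Hy Hz Hyc Hzc.
    by rewrite (Hc1a y Hy Hyc) (Hc1a z Hz Hzc).
  have Hxc : x \notin c.
    apply/negP => Hxc.
    have Hx2 : x \in flatten C' by apply/flattenP; exists c.
    by apply: (disj_mem Hu2 Hxc1 Hx2).
  move=> y z Hy Hz Hyc Hzc.
  have Hy' : y \in a' by move: Hy; rewrite in_cons => /orP [/eqP Ey|//]; by rewrite -Ey Hyc in Hxc.
  have Hz' : z \in a' by move: Hz; rewrite in_cons => /orP [/eqP Ez|//]; by rewrite -Ez Hzc in Hxc.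
  exact: (HCa' c Hc y z Hy' Hz' Hyc Hzc).
- rewrite /= -/s Hs2 size_cat mulSn; rewrite HfB in Hsza'.
  by apply: leq_add.
Qed.


Lemma amo_nil l : amo [::] l.
Proof. by move=> y z; rewrite in_nil. Qed.

Lemma GP_sym M B C a : flatten B = flatten C -> GP M B C a -> GP M C B a.
Proof. by move=> E [H1 H2 H3 H4 H5]; split => //; rewrite -E. Qed.

Lemma greedy M N : forall B C, size (flatten B) <= N -> flatten B = flatten C -> uniq (flatten B) ->
     all nonemp B -> all nonemp C -> all (fun b => size b <= M) B ->
     all (fun b => size b <= M) C -> exists a, GP M B C a.
Proof.
elim: N => [|N IH] B C.
- move=> Hs Heq _ HB HC _ _; exists [::]; split => //.
- case: B => [|b1 B'] ; case: C => [|c1 C'].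
  + move=> _ _ _ _ _ _ _; exists [::]; split => //.
  + move=> _ /= /(congr1 size) /esym /eqP; rewrite size_cat addn_eq0 size_eq0 => /andP [/eqP E _] _ _ /andP [].
    by rewrite /nonemp E.
  + move=> _ /= /(congr1 size) /eqP; rewrite size_cat addn_eq0 size_eq0 => /andP [/eqP E _] _ /andP [].
    by rewrite /nonemp E.
  + move=> Hs Heq Hu HB HC MB MC.
    case: (leqP (size b1) (size c1)) => Hle.
      exact: (greedy_step IH Hs Heq Hu HB HC MB MC Hle).
    have [a Ha] := greedy_step IH (c1 := b1) (b1 := c1) (C' := B') (B' := C')
       (ltac:(by rewrite -Heq)) (esym Heq) (ltac:(by rewrite -Heq)) HC HB MC MB (ltnW Hle).
    by exists a; apply: GP_sym.
Qed.

End Greedy.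

Section Iso.
Variable Z : finType.
Implicit Types t l r a b c : btree Z.

Lemma uiso_refl t : uiso t t.
Proof.
exists (fun p => p); split => //.
by rewrite map_id.
Qed.

Lemma uiso_trans t1 t2 t3 : uiso t1 t2 -> uiso t2 t3 -> uiso t1 t3.
Proof.
move=> [f [fi fp fa fl]] [g [gi gp ga gl]].
have fm p : p \in uverts t1 -> f p \in uverts t2.
  by move=> Hp; rewrite -(perm_mem fp); apply: map_f.
exists (g \o f); split.
- move=> p q Hp Hq /= E; apply: fi => //; apply: gi => //; exact: fm.
- by rewrite map_comp; apply: perm_trans gp; apply: perm_map.
- by move=> p q Hp Hq /=; rewrite ga ?fa // fm.
- by move=> p Hp /=; rewrite gl ?fl // fm.
Qed.

Definition rotf (p : seq bool) : seq bool :=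
  match p with
  | [::] => [::]
  | [:: false] => [:: true]
  | false :: false :: p' => false :: p'
  | false :: true :: p' => true :: false :: p'
  | true :: p' => true :: true :: p'
  end.

Lemma rotf_inj : injective rotf.
Proof.
move=> p q.
case: p => [|[] [|[] p]]; case: q => [|[] [|[] q]] //= E; by case: E => ->.
Qed.

Definition D (p q : seq bool) : bool :=
  [|| q == rcons p false, q == rcons p true,
       p == rcons q false, p == rcons q true,
       (p == [:: false]) && (q == [:: true]) |
       (p == [:: true]) && (q == [:: false])].

Lemma rotf_D p q : p != [::] -> q != [::] -> D (rotf p) (rotf q) = D p q.
Proof.
rewrite /D.
case: p => [|[] [|[] p]]; case: q => [|[] [|[] q]] //= _ _; rewrite ?eqseq_cons /=.
all: rewrite /= ?orbF ?andbF ?andbT ?eqxx. all: try done. by rewrite !orbA orbF.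
Qed.


Lemma filter_cons_nil (b : bool) (X : seq (seq bool)) :
  [seq p <- map (cons b) X | p != [::]] = map (cons b) X.
Proof. by elim: X => //= ? ? ->. Qed.

Lemma uverts_node l r :
  uverts (BNode l r) = map (cons false) (addrs l) ++ map (cons true) (addrs r).
Proof. by rewrite /uverts /= filter_cat !filter_cons_nil. Qed.

Lemma uverts_nonnil l r p : p \in uverts (BNode l r) -> p != [::].
Proof. by rewrite uverts_node mem_cat => /orP [] /mapP [? _ ->]. Qed.

Lemma uadj_node l r p q :
  uadj (BNode l r) p q = [&& p \in uverts (BNode l r), q \in uverts (BNode l r) & D p q].
Proof. by []. Qed.

Lemma rot_uiso a b c : uiso (BNode (BNode a b) c) (BNode a (BNode b c)).
Proof.
have Hp : perm_eq (map rotf (uverts (BNode (BNode a b) c))) (uverts (BNode a (BNode b c))).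
  rewrite !uverts_node /= !map_cat -!map_comp.
  rewrite -catA -[_ ++ [:: true] :: _]/(_ ++ [:: [:: true]] ++ _) perm_sym perm_catCA.
  exact: perm_refl.
exists rotf; split => //.
- by move=> p q _ _; apply: rotf_inj.
- move=> p q Hp1 Hq1; rewrite !uadj_node Hp1 Hq1 -!(perm_mem Hp) !map_f //=.
  by rewrite rotf_D // (uverts_nonnil Hp1, uverts_nonnil Hq1).
- by move=> p _; case: p => [|[] [|[] p]].
Qed.


Definition lct (x : Z) (p : seq Z) : btree Z := foldl (fun u y => BNode u (BLeaf y)) (BLeaf x) p.
Fixpoint rct (x : Z) (p : seq Z) : btree Z :=
  match p with [::] => BLeaf x | y :: p' => BNode (BLeaf x) (rct y p') end.

Lemma lct_rcons x p y : lct x (rcons p y) = BNode (lct x p) (BLeaf y).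
Proof. by rewrite /lct foldl_rcons. Qed.

Lemma comb_key x p : forall y q, uiso (BNode (lct x p) (rct y q)) (rct x (p ++ y :: q)).
Proof.
elim/last_ind: p => [|p z IH] y q; first exact: uiso_refl.
rewrite lct_rcons; apply: uiso_trans (rot_uiso _ _ _) _.
by rewrite cat_rcons; apply: (IH z (y :: q)).
Qed.

Lemma comb_uiso x p : uiso (lct x p) (rct x p).
Proof.
case/lastP: p => [|p y]; first exact: uiso_refl.
by rewrite lct_rcons -cats1; apply: (comb_key x p y [::]).
Qed.

Lemma cat_crit t (b : bool) :
  (forall p, p \in addrs t -> label t p = None ->
     rcons p b \in addrs t /\ label t (rcons p b) != None) -> caterpillar t.
Proof.
move=> H p Hp Hl.
have Hpa : p \in addrs t by move: Hp; rewrite /uverts; case: (is_node t) => //; rewrite mem_filter => /andP [].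
have [Hq Hlq] := H p Hpa Hl.
exists (rcons p b) => //.
rewrite /uadj Hp /=.
have -> : rcons p b \in uverts t.
  rewrite /uverts; case: (is_node t) => //; rewrite mem_filter Hq andbT.
  by case: (p).
by case: b {H Hq Hlq}; rewrite eqxx ?orbT.
Qed.

Lemma lct_cat x p : caterpillar (lct x p).
Proof.
apply: (cat_crit (b := true)).
elim/last_ind: p => [|p z IH] q /=.
  by rewrite mem_seq1 => /eqP ->.
rewrite lct_rcons /= in_cons mem_cat => /orP [/eqP ->|/orP [|]] //=.
  by move=> _; split => //; rewrite in_cons mem_cat mem_seq1 eqxx orbT.
  case/mapP => q' Hq' -> Hl; have [H1 H2] := IH q' Hq' Hl; split => //.
  by rewrite /= in_cons mem_cat map_f.
by rewrite mem_seq1 => /eqP ->.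
Qed.

Lemma rct_cat x p : caterpillar (rct x p).
Proof.
apply: (cat_crit (b := false)).
elim: p x => [|z p IH] x q /=.
  by rewrite mem_seq1 => /eqP ->.
rewrite !in_cons => /orP [/eqP ->|/orP [/eqP -> //|]].
  by move=> _; split => //; rewrite !in_cons eqxx orbT.
case/mapP => q' Hq' -> Hl; have [H1 H2] := IH z q' Hq' Hl; split => //.
by apply/orP; right; apply/orP; right; rewrite /=; apply: (map_f (cons true) H1).
Qed.

End Iso.

Section Restr.
Variable Z : finType.
Implicit Types t l r : btree Z.


Definition stepL (o : option (btree Z)) (x : Z) :=
  Some (if o is Some u then BNode u (BLeaf x) else BLeaf x).
Definition lc (s : seq Z) := foldl stepL None s.
Definition stepR (x : Z) (o : option (btree Z)) :=
  Some (if o is Some u then BNode (BLeaf x) u else BLeaf x).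
Definition rc (s : seq Z) := foldr stepR None s.

Lemma lc_cons x p : lc (x :: p) = Some (lct x p).
Proof.
rewrite /lc /lct /=.
have H : forall u, foldl stepL (Some u) p = Some (foldl (fun u y => BNode u (BLeaf y)) u p).
  by elim: p => [|y p IH] u //=; rewrite IH.
exact: H.
Qed.

Lemma rc_cons x p : rc (x :: p) = Some (rct x p).
Proof.
elim: p x => [|y p IH] x //.
have -> : rc [:: x, y & p] = stepR x (rc (y :: p)) by [].
by rewrite IH.
Qed.

Definition amoA (A : {set Z}) (l : seq Z) :=
  forall y z, y \in A -> z \in A -> y \in l -> z \in l -> y = z.

Lemma filt01 (A : {set Z}) (l : seq Z) : uniq l -> amoA A l ->
  [seq y <- l | y \in A] = [::] \/ exists y, [seq y <- l | y \in A] = [:: y].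
Proof.
move=> Hu Ha.
have : uniq [seq y <- l | y \in A] by rewrite filter_uniq.
have Hm w : w \in [seq y <- l | y \in A] -> (w \in A) && (w \in l) by rewrite mem_filter.
case: [seq y <- l | y \in A] Hm => [|y [|z f]] Hm; [by left | by right; exists y|].
move=> /= /andP [Hn _]; exfalso.
have /andP [Ay Ly] := Hm y (mem_head _ _).
have /andP [Az Lz] : (z \in A) && (z \in l) by apply: Hm; rewrite !in_cons eqxx orbT.
by move: Hn; rewrite (Ha y z Ay Az Ly Lz) in_cons eqxx.
Qed.

Lemma nil_cat (u v : seq Z) : u ++ v = [::] -> u = [::] /\ v = [::].
Proof. by case: u; case: v. Qed.

Lemma restrict0 (A : {set Z}) t : [seq y <- leaves t | y \in A] = [::] -> restrict A t = None.
Proof.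
elim: t => [x|l IHl r IHr] /=; first by case: ifP.
by rewrite filter_cat => /nil_cat [/IHl -> /IHr ->].
Qed.

Lemma restrict1 (A : {set Z}) t y : [seq y <- leaves t | y \in A] = [:: y] -> restrict A t = Some (BLeaf y).
Proof.
elim: t => [x|l IHl r IHr] /=; first by case: ifP => // _ [->].
rewrite filter_cat; case E: [seq y <- leaves l | y \in A] => [|w f] /=.
  by move=> /IHr ->; rewrite restrict0.
case=> Ew /nil_cat [Ef Er]; rewrite (restrict0 Er) IHl //; by rewrite E Ef Ew.
Qed.

Lemma restrict_left (A : {set Z}) t : uniq (leaves t) ->
  (forall H, List.In H (left_hangs t) -> amoA A (leaves H)) ->
  restrict A t = lc [seq y <- leaves t | y \in A].
Proof.
elim: t => [x|l IHl r IHr] Hu Hh; first by rewrite /=; case: (x \in A).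
move: Hu; rewrite /= cat_uniq => /and3P [Hul _ Hur].
rewrite filter_cat /lc foldl_cat -/(lc _) -IHl //; last by move=> H HH; apply: Hh; right.
have [E|[y E]] := filt01 Hur (Hh r (or_introl erefl)).
  by rewrite E (restrict0 E) /=; case: (restrict A l).
by rewrite E (restrict1 E) /=; case: (restrict A l).
Qed.

Lemma restrict_right (A : {set Z}) t : uniq (leaves t) ->
  (forall H, List.In H (right_hangs t) -> amoA A (leaves H)) ->
  restrict A t = rc [seq y <- leaves t | y \in A].
Proof.
elim: t => [x|l IHl r IHr] Hu Hh; first by rewrite /=; case: (x \in A).
move: Hu; rewrite /= cat_uniq => /and3P [Hul _ Hur].
rewrite filter_cat /rc foldr_cat -/(rc _) -IHr //; last by move=> H HH; apply: Hh; right.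
have [E|[y E]] := filt01 Hul (Hh l (or_introl erefl)).
  by rewrite E (restrict0 E) /=; case: (restrict A r).
by rewrite E (restrict1 E) /=; case: (restrict A r).
Qed.

Lemma leaves_left t : leaves t = flatten (rev (map (@leaves Z) (left_hangs t))).
Proof.
elim: t => [x|l IHl r _] //=.
by rewrite rev_cons -cats1 flatten_cat /= cats0 -IHl.
Qed.

Lemma leaves_right t : leaves t = flatten (map (@leaves Z) (right_hangs t)).
Proof. by elim: t => [x|l _ r IHr] //=; rewrite -IHr. Qed.

Lemma In_map_leaves (s : seq (btree Z)) H : List.In H s -> leaves H \in map (@leaves Z) s.
Proof.
elim: s => [|H0 s IH] //= [->|HH]; first by rewrite mem_head.
by rewrite in_cons IH ?orbT.
Qed.

Lemma map_leaves_In (s : seq (btree Z)) b : b \in map (@leaves Z) s -> exists H, List.In H s /\ b = leaves H.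
Proof.
elim: s => [|H0 s IH] //=; rewrite in_cons => /orP [/eqP ->|/IH [H [HH ->]]].
  by exists H0; split => //; left.
by exists H; split => //; right.
Qed.

Lemma leaves_nonnil t : leaves t != [::].
Proof. by elim: t => [x|l IHl r IHr] //=; case: (leaves l) IHl. Qed.

End Restr.


Lemma foldr_max_ge (Z : finType) (s : seq (seq Z)) b : b \in s -> size b <= foldr (fun b m => maxn (size b) m) 0 s.
Proof.
elim: s => [|b0 s IH] //=; rewrite in_cons => /orP [/eqP ->|/IH H]; first by rewrite leq_maxl.
by rewrite (leq_trans H) // leq_maxr.
Qed.

Lemma foldr_max_lt (Z : finType) (s : seq (seq Z)) (X : R) :
  (forall b, b \in s -> Rlt (INR (size b)) X) -> Rlt 0 X ->
  Rlt (INR (foldr (fun b m => maxn (size b) m) 0 s)) X.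
Proof.
elim: s => [|b0 s IH] H HX //=.
have IH' := IH (fun b Hb => H b (ltac:(by rewrite in_cons Hb orbT))) HX.
have H0 := H b0 (mem_head _ _).
move: IH'; set m := foldr _ 0 s => IH'.
by rewrite /maxn; case: ifP.
Qed.

Theorem lemma2 (n : nat) (Z : finType) (T1 T2 : btree Z) :
  (2 <= n)%N ->
  is_Ztree T1 -> is_Ztree T2 ->
  leaves T1 = leaves T2 ->
  (forall Q, List.In Q (left_hangs T1) ->
     Rlt (INR (nleaves Q)) (Rdiv (INR #|Z|) (log2 (INR n)))) ->
  (forall Rt, List.In Rt (right_hangs T2) ->
     Rlt (INR (nleaves Rt)) (Rdiv (INR #|Z|) (log2 (INR n)))) ->
  exists A : {set Z},
    Rle (log2 (INR n)) (INR #|A|) /\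
    exists t1 t2 : btree Z,
      [/\ restrict A T1 = Some t1, restrict A T2 = Some t2,
          uiso t1 t2, caterpillar t1 & caterpillar t2].
Proof.
move=> Hn /andP [Hu1 Hall1] _ Hlv HQ HR.
set L := log2 (INR n).
set B := rev (map (@leaves Z) (left_hangs T1)).
set C := map (@leaves Z) (right_hangs T2).
have HfB : flatten B = leaves T1 by rewrite /B -leaves_left.
have HfC : flatten C = leaves T1 by rewrite /C -leaves_right Hlv.
have HN : #|Z| = size (leaves T1).
  rewrite -(card_uniqP Hu1); apply: eq_card => z; by rewrite (forallP Hall1 z).
set M := foldr (fun b m => maxn (size b) m) 0 (B ++ C).
have [a [Hua Hsa HBa HCa Hsz]] : exists a, GP M B C a.
  apply: (greedy (N := size (flatten B))) => //.
  - by rewrite HfB HfC.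
  - by rewrite HfB.
  - rewrite /B all_rev; elim: (left_hangs T1) => //= H l ->; rewrite andbT; exact: leaves_nonnil.
  - rewrite /C; elim: (right_hangs T2) => //= H l ->; rewrite andbT; exact: leaves_nonnil.
  - by apply/allP => b Hb; apply: foldr_max_ge; rewrite mem_cat Hb.
  - by apply/allP => b Hb; apply: foldr_max_ge; rewrite mem_cat Hb orbT.
rewrite HfB -HN in Hsz.
set A := [set x in a].
have HA : #|A| = size a by rewrite cardsE (card_uniqP Hua).
have Hn1 : Rlt 1 (INR n).
  have : (1 < n)%coq_nat by apply/ltP.
  by move/lt_INR; rewrite INR_1.
have HL : Rlt 0 L.
  rewrite /L /log2; apply: Rdiv_lt_0_compat.
    by rewrite -ln_1; apply: ln_increasing => //; apply: Rlt_0_1.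
  rewrite -ln_1; apply: ln_increasing; first exact: Rlt_0_1.
  lra.
have HNpos : (0 < #|Z|)%N by rewrite HN lt0n size_eq0 leaves_nonnil.
have HNposR : Rlt 0 (INR #|Z|) by apply: lt_0_INR; apply/ltP.
have HX : Rlt 0 (Rdiv (INR #|Z|) L) by apply: Rdiv_lt_0_compat.
have HM : Rlt (INR M) (Rdiv (INR #|Z|) L).
  apply: foldr_max_lt => // b; rewrite mem_cat => /orP [].
    rewrite /B mem_rev => /map_leaves_In [H [HH ->]]; exact: HQ.
  rewrite /C => /map_leaves_In [H [HH ->]]; exact: HR.
have Hr : (0 < size a)%N.
  rewrite lt0n; apply/negP => /eqP E; move: Hsz; rewrite E mul0n leqn0 => /eqP E2.
  by rewrite E2 in HNpos.
have HLr : Rle L (INR (size a)).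
  have h2 : Rle (INR #|Z|) (INR (size a) * INR M)%R.
    by rewrite -mult_INR; apply: le_INR; apply/leP.
  have h1 : Rlt (INR M * L)%R (INR #|Z|).
    have : Rlt (INR M * L)%R (Rdiv (INR #|Z|) L * L)%R by apply: Rmult_lt_compat_r.
    have -> : (Rdiv (INR #|Z|) L * L)%R = INR #|Z| by field; apply: Rgt_not_eq.
    done.
  have h3 : Rle 1 (INR (size a)).
    by rewrite -INR_1; apply: le_INR; apply/leP.
  have h4 : Rle (INR #|Z| * L)%R (INR (size a) * INR M * L)%R by apply: Rmult_le_compat_r; lra.
  have h5 : Rlt (INR (size a) * (INR M * L))%R (INR (size a) * INR #|Z|)%R by apply: Rmult_lt_compat_l; lra.
  nra.
exists A; split; first by rewrite HA.
have HamoL : forall H, List.In H (left_hangs T1) -> amoA A (leaves H).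
  move=> H HH y z; rewrite !inE => Hy Hz; apply: HBa => //.
  by rewrite /B mem_rev; apply: In_map_leaves.
have HamoR : forall H, List.In H (right_hangs T2) -> amoA A (leaves H).
  move=> H HH y z; rewrite !inE => Hy Hz; apply: HCa => //.
  by rewrite /C; apply: In_map_leaves.
have Hu2 : uniq (leaves T2) by rewrite -Hlv.
rewrite (restrict_left Hu1 HamoL) (restrict_right Hu2 HamoR) -Hlv.
case Es: [seq y <- leaves T1 | y \in A] => [|x p].
  exfalso; move: Hr; case Ea: a Hsa => [|y a'] // Hsa' _.
  have Hy : y \in [seq y <- leaves T1 | y \in A].
    by rewrite mem_filter inE Ea mem_head /= -HfB Hsa' // mem_head.
  by rewrite Es in Hy.
rewrite lc_cons rc_cons.
exists (lct x p), (rct x p); split => //.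
- exact: comb_uiso.
- exact: lct_cat.
- exact: rct_cat.
Qed.
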